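(* Let $G=\langle A,B\rangle$ be an abstract rank one group with unipotent subgroups $A,B$ and $V$ a $\mathbb{Z}G$-module with $[V,A,A,A]=0$, $[V,G,G,G]\neq0$, $[V,G]=V$ and $C_V(G)=0$, and suppose $A_0:=C_A([V,A])\cap C_A(V/C_V(A))\neq1$. Then: (a) $V=C_V(A)\oplus[V,B]$; (b) $C_V(A)=[V,A_0]=[V,a]$ for all $a\in A_0\setminus\{1\}$; (c) $[V,A]=C_V(a)$ for all $a\in A_0\setminus\{1\}$; (d) if $A$ is not abelian, then $C_V(A)=[V,A,A]$.
   Context: $G$ acts on $V$ on the right, $[v,g]=-v+vg$; $[X,Y]$ is the subgroup generated by all such commutators, $[X,Y,Z]=[[X,Y],Z]$. Abstract rank one group with unipotent subgroups $A,B$: $G=\langle A,B\rangle$, $A\neq B$ nilpotent, for each $a\in A\setminus\{1\}$ there is $b\in B\setminus\{1\}$ with $B^a=A^b$, and for each $b\in B\setminus\{1\}$ some $a\in A\setminus\{1\}$ with $A^b=B^a$. *)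

(* Defs.v *)
From HB Require Import structures.
From mathcomp Require Import all_boot all_order all_algebra.
Set Implicit Arguments. Unset Strict Implicit. Unset Printing Implicit Defensive.

Section GroupDefs.
Variable gT : groupType.
Local Open Scope group_scope.

Definition seteqG (X Y : gT -> Prop) := forall x, X x <-> Y x.

Definition is_subgroup (H : gT -> Prop) :=
  H 1 /\ (forall x y, H x -> H y -> H (x * y^-1)).

Definition gen (S : gT -> Prop) : gT -> Prop :=
  fun x => forall H, is_subgroup H -> (forall s, S s -> H s) -> H x.

Definition commgrp (X Y : gT -> Prop) : gT -> Prop :=
  gen (fun z => exists x y, X x /\ Y y /\ z = commg x y).

Fixpoint lcs (H : gT -> Prop) (n : nat) : gT -> Prop :=
  match n with
  | 0 => H
  | n.+1 => commgrp (lcs H n) H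
  end.

Definition nilpotent_grp (H : gT -> Prop) :=
  exists n, forall x, lcs H n x -> x = 1.

Definition abelian_grp (H : gT -> Prop) :=
  forall x y, H x -> H y -> x * y = y * x.

Definition conjset (H : gT -> Prop) (g : gT) : gT -> Prop :=
  fun x => exists h, H h /\ x = conjg h g.

Definition rank_one (A B : gT -> Prop) :=
  is_subgroup A /\ is_subgroup B /\
  (forall g, gen (fun x => A x \/ B x) g) /\
  ~ seteqG A B /\ nilpotent_grp A /\ nilpotent_grp B /\
  (forall a, A a -> a <> 1 ->
          exists b, B b /\ b <> 1 /\ seteqG (conjset B a) (conjset A b)) /\
  (forall b, B b -> b <> 1 ->
          exists a, A a /\ a <> 1 /\ seteqG (conjset A b) (conjset B a)).
End GroupDefs.

Section ModuleDefs.
Variables (gT : groupType) (V : zmodType).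
Local Open Scope ring_scope.

Definition is_right_module (act : V -> gT -> V) :=
  [/\ (forall v, act v 1%g = v),
      (forall v g h, act v (g * h)%g = act (act v g) h)
    & (forall g v w, act (v + w) g = act v g + act w g)].

Definition seteqV (X Y : V -> Prop) := forall v, X v <-> Y v.

Definition is_addsubgroup (X : V -> Prop) :=
  X 0 /\ (forall v w, X v -> X w -> X (v - w)).

Definition genV (S : V -> Prop) : V -> Prop :=
  fun v => forall X, is_addsubgroup X -> (forall s, S s -> X s) -> X v.

Variable act : V -> gT -> V.

Definition commV (v : V) (g : gT) : V := - v + act v g.

Definition commVS (X : V -> Prop) (Y : gT -> Prop) : V -> Prop :=
  genV (fun z => exists x y, X x /\ Y y /\ z = commV x y).

Definition setTV : V -> Prop := fun _ => True.

Definition centV (Y : gT -> Prop) : V -> Prop :=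
  fun v => forall y, Y y -> act v y = v.

Definition centG (Y : gT -> Prop) (X : V -> Prop) : gT -> Prop :=
  fun y => Y y /\ forall v, X v -> act v y = v.

(* C_Y(V/W) : elements of Y acting trivially on V/W, i.e. [V,y] <= W *)
Definition centGquot (Y : gT -> Prop) (W : V -> Prop) : gT -> Prop :=
  fun y => Y y /\ forall v, W (commV v y).

Definition directsum_eq (X Y : V -> Prop) :=
  (forall v, exists x y, X x /\ Y y /\ v = x + y) /\
  (forall v, X v -> Y v -> v = 0).
End ModuleDefs.

(* Main.v *)
Require Import Defs.
From HB Require Import structures.
From mathcomp Require Import all_boot all_order all_algebra.
From Stdlib Require Import Classical.
Set Implicit Arguments. Unset Strict Implicit. Unset Printing Implicit Defensive.
Import GRing.Theory.

Lemma sg1 (gT : groupType) (H : gT -> Prop) : is_subgroup H -> H 1%g.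
Proof. by case. Qed.
Lemma sgV (gT : groupType) (H : gT -> Prop) x : is_subgroup H -> H x -> H (x^-1)%g.
Proof. move=> [h1 hd] hx; have := hd _ _ h1 hx; by rewrite mul1g. Qed.
Lemma sgM (gT : groupType) (H : gT -> Prop) x y : is_subgroup H -> H x -> H y -> H (x * y)%g.
Proof. move=> hH hx hy; have := (proj2 hH) _ _ hx (sgV hH hy); by rewrite invgK. Qed.
Lemma sgJ (gT : groupType) (H : gT -> Prop) x y : is_subgroup H -> H x -> H y -> H (x ^ y)%g.
Proof. move=> hH hx hy; rewrite conjgE; apply: sgM => //; [exact: sgV | exact: sgM]. Qed.

Section M.
Local Open Scope ring_scope.
Lemma act_add (gT : groupType) (V : zmodType) (act : V -> gT -> V) v w g :
  is_right_module act -> act (v + w) g = act v g + act w g.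
Proof. by case. Qed.
Lemma act0 (gT : groupType) (V : zmodType) (act : V -> gT -> V) g :
  is_right_module act -> act 0 g = 0.
Proof. move=> hm; have h := act_add 0 0 g hm; rewrite addr0 in h.
  apply: (addrI (act 0 g)); by rewrite addr0 -h. Qed.
End M.

Section M2.
Local Open Scope ring_scope.
Variables (gT : groupType) (V : zmodType) (act : V -> gT -> V).
Hypothesis hm : is_right_module act.

Lemma actN v g : act (-v) g = - act v g.
Proof. apply: (addrI (act v g)); by rewrite -act_add // !addrN act0. Qed.
Lemma actB v w g : act (v - w) g = act v g - act w g.
Proof. by rewrite act_add // actN. Qed.
Lemma actM v g h : act (act v g) h = act v (g * h)%g.
Proof. by case: hm => _ h2 _; rewrite h2. Qed.
Lemma act1 v : act v 1%g = v.
Proof. by case: hm. Qed.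
Lemma actKV v g : act (act v g) (g^-1)%g = v.
Proof. by rewrite actM mulgV act1. Qed.
Lemma actVK v g : act (act v (g^-1)%g) g = v.
Proof. by rewrite actM mulVg act1. Qed.
Lemma actJ v x y : act v (x ^ y)%g = act (act (act v (y^-1)%g) x) y.
Proof. by rewrite conjgE !actM. Qed.
Lemma commV_add v w g : commV act (v + w) g = commV act v g + commV act w g.
Proof. by rewrite /commV act_add // opprD addrACA. Qed.
Lemma commV_mul v g h : commV act v (g * h)%g = commV act v g + commV act (act v g) h.
Proof. by rewrite /commV -actM addrA addrK. Qed.
Lemma commV_V v g : commV act v (g^-1)%g = - commV act (act v (g^-1)%g) g.
Proof. by rewrite /commV actVK opprD opprK addrC. Qed.
Lemma commV1 v : commV act v 1%g = 0.
Proof. by rewrite /commV act1 addNr. Qed.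
Lemma actE v g : act v g = v + commV act v g.
Proof. by rewrite /commV addNKr. Qed.
Lemma commVJ v x y : commV act v (x ^ y)%g = act (commV act (act v (y^-1)%g) x) y.
Proof. by rewrite /commV actJ act_add // actN actVK. Qed.

Lemma fix_as g : is_addsubgroup (fun x => act x g = x).
Proof. split; first exact: act0. by move=> v w hv hw; rewrite actB hv hw. Qed.
Lemma cent_as (Y : gT -> Prop) : is_addsubgroup (centV act Y).
Proof. split; first by move=> y _; exact: act0.
  by move=> v w hv hw y hy; rewrite actB hv ?hw. Qed.
Lemma fixgrp v : is_subgroup (fun g => act v g = v).
Proof. split; first exact: act1.
  move=> x y hx hy; rewrite -actM hx.
  by rewrite -{1}hy actKV. Qed.
End M2.

Section AS.
Local Open Scope ring_scope.
Variables (V : zmodType).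
Lemma asN (X : V -> Prop) v : is_addsubgroup X -> X v -> X (- v).
Proof. move=> [h0 hB] hv; have := hB _ _ h0 hv; by rewrite sub0r. Qed.
Lemma asD (X : V -> Prop) v w : is_addsubgroup X -> X v -> X w -> X (v + w).
Proof. move=> hX hv hw; have := (proj2 hX) _ _ hv (asN hX hw); by rewrite opprK. Qed.
Lemma genV_in (S : V -> Prop) s : S s -> genV S s.
Proof. by move=> hs X _ hX; exact: hX. Qed.
Lemma genV_as (S : V -> Prop) : is_addsubgroup (genV S).
Proof. split; first by move=> X [h0 _] _.
  move=> v w hv hw X hX hS; exact: (proj2 hX) _ _ (hv X hX hS) (hw X hX hS). Qed.
Lemma genV_ind (S X : V -> Prop) v : is_addsubgroup X -> (forall s, S s -> X s) -> genV S v -> X v.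
Proof. by move=> hX hS hv; apply: hv. Qed.
Lemma genV_mono (S T : V -> Prop) v : (forall s, S s -> T s) -> genV S v -> genV T v.
Proof. move=> hST hv X hX hT; apply: hv => // s hs; exact: hT (hST _ hs). Qed.
Definition Sum (X Y : V -> Prop) v := exists x y, X x /\ Y y /\ v = x + y.
Lemma sum_as X Y : is_addsubgroup X -> is_addsubgroup Y -> is_addsubgroup (Sum X Y).
Proof. move=> hX hY; split; first by exists 0, 0; rewrite addr0; split; [exact: hX.1|split; [exact: hY.1|]].
  move=> v w [x1 [y1 [h1 [h2 ->]]]] [x2 [y2 [h3 [h4 ->]]]].
  exists (x1 - x2), (y1 - y2); split; first exact: hX.2.
  split; first exact: hY.2. by rewrite opprD addrACA. Qed.
Lemma cong_trans (X : V -> Prop) a b c : is_addsubgroup X -> X (a - b) -> X (b - c) -> X (a - c).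
Proof. move=> hX h1 h2; have := asD hX h1 h2; by rewrite addrA subrK. Qed.
Lemma cong_add (X : V -> Prop) a b c d : is_addsubgroup X -> X (a - b) -> X (c - d) -> X ((a + c) - (b + d)).
Proof. move=> hX h1 h2; have := asD hX h1 h2; by rewrite opprD addrACA. Qed.
End AS.

Lemma commVS_in (gT : groupType) (V : zmodType) (act : V -> gT -> V) (X : V -> Prop) (Y : gT -> Prop) x y :
  X x -> Y y -> commVS act X Y (commV act x y).
Proof. move=> hx hy; apply: genV_in; by exists x, y. Qed.

Lemma genA (gT : groupType) (A B : gT -> Prop) a : rank_one A B -> A a -> a <> 1%g ->
  forall H, is_subgroup H -> H a -> (forall b, B b -> H b) -> forall g, H g.
Proof.
move=> [sA [sB [hgen [_ [_ [_ [axA axB]]]]]]] Aa a1 H sH Ha HB g.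
apply: (hgen g H sH) => s [As|Bs]; last exact: HB.
have [b [Bb [b1 eq]]] := axA a Aa a1.
have : conjset B a (s ^ b)%g by apply/(eq _).2; exists s.
case=> c [Bc e].
have -> : s = ((c ^ a) ^ b^-1)%g by rewrite -e conjgK.
apply: sgJ => //; [apply: sgJ => //; exact: HB | exact: sgV (HB _ Bb)].
Qed.

Lemma genB (gT : groupType) (A B : gT -> Prop) b : rank_one A B -> B b -> b <> 1%g ->
  forall H, is_subgroup H -> H b -> (forall a, A a -> H a) -> forall g, H g.
Proof.
move=> [sA [sB [hgen [_ [_ [_ [axA axB]]]]]]] Bb b1 H sH Hb HA g.
apply: (hgen g H sH) => s [As|Bs]; first exact: HA.
have [a [Aa [a1 eq]]] := axB b Bb b1.
have : conjset A b (s ^ a)%g by apply/(eq _).2; exists s.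
case=> c [Ac e].
have -> : s = ((c ^ b) ^ a^-1)%g by rewrite -e conjgK.
apply: sgJ => //; [apply: sgJ => //; exact: HA | exact: sgV (HA _ Aa)].
Qed.

Lemma Wtrick (gT : groupType) (V : zmodType) (act : V -> gT -> V) (W : V -> Prop) (S : gT -> Prop) :
 is_right_module act -> is_addsubgroup W ->
 seteqV (commVS act (@setTV V) (fun _ => True)) (@setTV V) ->
 (forall H, is_subgroup H -> (forall s, S s -> H s) -> forall g, H g) ->
 (forall v s, S s -> W (commV act v s)) -> forall v, W v.
Proof.
move=> hm hW hV hgen hS v.
have hall : forall g w, W (commV act w g).
  move=> g; apply: (hgen (fun g => forall w, W (commV act w g)) _ _ g); last first.
    by move=> s Ss w; exact: hS.
  split; first by move=> w; rewrite commV1 //; exact: (proj1 hW).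
  move=> x y hx hy w; rewrite commV_mul // commV_V //; exact: (proj2 hW) _ _ (hx w) (hy _).
have := (hV v).2 I. apply: genV_ind => //. move=> s [x [y [_ [_ ->]]]]. exact: hall.
Qed.

Lemma cent0 (gT : groupType) (V : zmodType) (act : V -> gT -> V) (S : gT -> Prop) v :
 is_right_module act -> (forall v, centV act (fun _ => True) v -> v = 0%R) ->
 (forall H, is_subgroup H -> (forall s, S s -> H s) -> forall g, H g) ->
 (forall s, S s -> act v s = v) -> v = 0%R.
Proof. move=> hm hC hgen hS; apply: hC => g _; exact: (hgen _ (fixgrp hm v) hS g). Qed.

Unset Implicit Arguments.
Set Strict Implicit.
Theorem lemma3p11 (gT : groupType) (A B : gT -> Prop)
  (V : zmodType) (act : V -> gT -> V) :
  rank_one A B ->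
  is_right_module act ->
  (forall v, commVS act (commVS act (commVS act (@setTV V) A) A) A v -> v = 0%R) ->
  (exists v, commVS act (commVS act (commVS act (@setTV V) (fun _ => True))
                (fun _ => True)) (fun _ => True) v /\ v <> 0%R) ->
  seteqV (commVS act (@setTV V) (fun _ => True)) (@setTV V) ->
  (forall v, centV act (fun _ => True) v -> v = 0%R) ->
  let A0 := fun a => centG act A (commVS act (@setTV V) A) a /\
                     centGquot act A (centV act A) a in
  (exists a, A0 a /\ a <> 1%g) ->
  [/\ directsum_eq (centV act A) (commVS act (@setTV V) B),
      seteqV (centV act A) (commVS act (@setTV V) A0) /\
                (forall a, A0 a -> a <> 1%g ->
                   seteqV (centV act A) (commVS act (@setTV V) (fun x => x = a))),
      (forall a, A0 a -> a <> 1%g ->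
                   seteqV (commVS act (@setTV V) A) (centV act (fun x => x = a)))
    & (~ abelian_grp A ->
                   seteqV (centV act A) (commVS act (commVS act (@setTV V) A) A))].
Proof.
move=> hr hm h3 _ hV hC A0 [a0 [hA0 a01]].
have [sA [sB [_ [_ [_ [_ [axA _]]]]]]] := hr.
have A0A : forall a, A0 a -> A a := fun a h => h.1.1.
have A0c : forall a, A0 a -> forall v, commVS act (@setTV V) A v -> act v a = v := fun a h => h.1.2.
have A0q : forall a, A0 a -> forall v, centV act A (commV act v a) := fun a h => h.2.2.
have [b [Bb [_ eqb]]] := axA a0 (A0A _ hA0) a01.
pose n := (b * a0^-1)%g.
have T1 : forall d, A d -> B (d ^ n)%g.
  move=> d Ad. have : conjset A b (d ^ b)%g by exists d.
  move/(eqb _).2 => [e [Be E]]. by rewrite /n conjgM E conjgK.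
have T2 : forall c, B c -> exists d, A d /\ c = (d ^ n)%g.
  move=> c Bc. have : conjset B a0 (c ^ a0)%g by exists c.
  move/(eqb _).1 => [d [Ad E]]. exists d; split=>//. by rewrite /n conjgM -E conjgK.
pose be := (a0 ^ n)%g.
have Bbe : B be := T1 _ (A0A _ hA0).
have be1 : be <> 1%g.
  move=> E; apply: a01; apply/eqP; rewrite -(conjg_eq1 _ n) -/be E; exact: eqxx.
have P1 : forall v c, B c -> act (commV act v be) c = commV act v be.
  move=> v c Bc; have [d [Ad ->]] := T2 c Bc.
  by rewrite /be commVJ // actJ // actKV // (A0q _ hA0 _ d Ad).
have P2 : forall x, commVS act (@setTV V) B x -> act x be = x.
  move=> x; apply: (genV_ind (X := fun x => act x be = x)); first exact: fix_as.
  move=> s [v [c [_ [Bc ->]]]]; have [d [Ad ->]] := T2 c Bc.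
  rewrite commVJ // /be actJ // actKV // (A0c _ hA0) //; exact: commVS_in.
have genA0 : forall a, A a -> a <> 1%g -> forall H, is_subgroup H ->
    (forall s, s = a \/ B s -> H s) -> forall g, H g.
  move=> a Aa a1 H sH hS; apply: (genA hr Aa a1) => //.
    by apply: hS; left. by move=> c Bc; apply: hS; right.
have genbe : forall H, is_subgroup H -> (forall s, A s \/ s = be -> H s) -> forall g, H g.
  move=> H sH hS; apply: (genB hr Bbe be1) => //.
    by apply: hS; right. by move=> c Ac; apply: hS; left.
have CA_Cbe : forall v, centV act A v -> act v be = v -> v = 0%R.
  move=> v hv hb; apply: (cent0 hm hC genbe) => s [As| ->] //; exact: hv.
have Ca_CB : forall a, A a -> a <> 1%g -> forall v, act v a = v -> centV act B v -> v = 0%R.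
  move=> a Aa a1 v ha hv; apply: (cent0 hm hC (genA0 a Aa a1)) => s [-> | Bs] //; exact: hv.
have I0 : forall v, centV act A v -> commVS act (@setTV V) B v -> v = 0%R.
  move=> v hv hb; apply: CA_Cbe => //; exact: P2.
have Cb' : forall a, A0 a -> forall v, commVS act (@setTV V) (fun x => x = a) v -> centV act A v.
  move=> a ha v; apply: (genV_ind (X := centV act A)); first exact: cent_as.
  by move=> s [w [x [_ [-> ->]]]]; exact: A0q.
have Cb : forall a, A0 a -> a <> 1%g -> forall v, centV act A v -> commVS act (@setTV V) (fun x => x = a) v.
  move=> a ha a1 v hv.
  have [y [z [hy [hz E]]]] : Sum (commVS act (@setTV V) (fun x => x = a)) (commVS act (@setTV V) B) v.
    apply: (Wtrick (S := fun s => s = a \/ B s) hm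
    (sum_as (genV_as _) (genV_as _)) hV (genA0 a (A0A _ ha) a1)) => w s [->|Bs].
      exists (commV act w a), 0%R; split; first exact: commVS_in.
      split; [exact: (genV_as _).1 | by rewrite addr0].
    exists 0%R, (commV act w s); split; first exact: (genV_as _).1.
    split; [exact: commVS_in | by rewrite add0r].
  have hyA := Cb' a ha y hy.
  have z0 : z = 0%R.
    apply: I0 => //. have -> : z = (v - y)%R by rewrite E [(y + z)%R]addrC addrK.
    exact: (cent_as hm A).2.
  by rewrite E z0 addr0.
split.
- split.
  + move=> v.
    apply: (Wtrick (S := fun s => s = a0 \/ B s) hm
      (sum_as (cent_as hm _) (genV_as _)) hV (genA0 a0 (A0A _ hA0) a01)) => w s [->|Bs].
      exists (commV act w a0), 0%R; split; first exact: A0q.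
      split; [exact: (genV_as _).1 | by rewrite addr0].
    exists 0%R, (commV act w s); split; first exact: (cent_as hm _).1.
    split; [exact: commVS_in | by rewrite add0r].
  + exact: I0.
- split.
  + move=> v; split.
      move=> hv; apply: genV_mono (Cb a0 hA0 a01 v hv).
      by move=> s [w [x [_ [-> ->]]]]; exists w, a0.
    apply: (genV_ind (X := centV act A)); first exact: cent_as.
    by move=> s [w [x [_ [hx ->]]]]; exact: A0q.
  + by move=> a ha a1 v; split; [exact: Cb | exact: Cb'].
- move=> a ha a1 v; split.
    by move=> hv y ->; exact: A0c.
  move=> hv; have hva : act v a = v := hv a erefl.
  have [y [m [hy [hmm E]]]] : Sum (centV act B) (commVS act (@setTV V) A) v.
    apply: (Wtrick (S := fun s => A s \/ s = be) hm
      (sum_as (cent_as hm _) (genV_as _)) hV genbe) => w s [As| ->].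
      exists 0%R, (commV act w s); split; first exact: (cent_as hm _).1.
      split; [exact: commVS_in | by rewrite add0r].
    exists (commV act w be), 0%R; split; first by move=> c Bc; exact: P1.
    split; [exact: (genV_as _).1 | by rewrite addr0].
  have y0 : y = 0%R.
    apply: (Ca_CB a (A0A _ ha) a1) => //.
    move: hva; rewrite E act_add // (A0c _ ha _ hmm); exact: addIr.
  by rewrite E y0 add0r.
- move=> nab.
  pose V2 := commVS act (commVS act (@setTV V) A) A.
  have V2as : is_addsubgroup V2 := genV_as _.
  have V2C : forall v, V2 v -> centV act A v.
    move=> v; apply: (genV_ind (X := centV act A)); first exact: cent_as.
    move=> s [x [y [hx [Ay ->]]]] y' Ay'.
    have := h3 _ (commVS_in (commVS_in hx Ay) Ay').
    by move/eqP; rewrite /commV [X in (X == _)]addrC subr_eq0 => /eqP.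
  move=> v; split; last exact: V2C.
  move=> hv.
  have [x [y [Ax [Ay nxy]]]] : exists x y, A x /\ A y /\ (x * y <> y * x)%g.
    apply: NNPP => H; apply: nab => x y Ax Ay; apply: NNPP => nxy; apply: H.
    by exists x, y.
  pose c := commg x y.
  have Ac : A c.
    rewrite /c /commg; apply: sgM => //; [exact: sgV | exact: sgJ].
  have c1 : c <> 1%g.
    by move=> E; apply: nxy; rewrite (commgC x y) -/c E mulg1.
  have cl : forall w, V2 (commV act w c).
    move=> w; pose p := commV act w.
    have E1 : forall g h, A g -> A h -> V2 (p (g * h)%g - (p g + p h))%R.
      move=> g h Ag Ah; rewrite /p commV_mul // [act w g]actE commV_add //.
      rewrite addrA [X in (X - _)%R]addrC addrK.
      exact: commVS_in (commVS_in (I : @setTV V w) Ag) Ah.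
    have E2 : forall g, A g -> V2 (p (g^-1)%g - - p g)%R.
      move=> g Ag; have := E1 g _ Ag (sgV sA Ag).
      rewrite mulgV /p commV1 // sub0r => /(asN V2as); rewrite opprK opprK addrC.
      done.
    have : V2 (p c - (- p x + (- p y + (p x + p y))))%R.
      rewrite /c /commg /conjg.
      apply: (cong_trans V2as (E1 _ _ (sgV sA Ax) (sgM sA (sgV sA Ay) (sgM sA Ax Ay)))).
      apply: (cong_add V2as (E2 _ Ax)).
      apply: (cong_trans V2as (E1 _ _ (sgV sA Ay) (sgM sA Ax Ay))).
      exact: (cong_add V2as (E2 _ Ay) (E1 _ _ Ax Ay)).
    by rewrite addrA -opprD addNr subr0.
  have [y0 [z [hy [hz E]]]] : Sum V2 (commVS act (@setTV V) B) v.
    apply: (Wtrick (S := fun s => s = c \/ B s) hm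
      (sum_as V2as (genV_as _)) hV (genA0 c Ac c1)) => w s [->|Bs].
      exists (commV act w c), 0%R; split; first exact: cl.
      split; [exact: (genV_as _).1 | by rewrite addr0].
    exists 0%R, (commV act w s); split; first exact: V2as.1.
    split; [exact: commVS_in | by rewrite add0r].
  have z0 : z = 0%R.
    apply: I0 => //. have -> : z = (v - y0)%R by rewrite E [(y0 + z)%R]addrC addrK.
    apply: (cent_as hm A).2 => //; exact: V2C.
  by rewrite E z0 addr0.
Qed.
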